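(* Let $m\ge1$ be an integer and let $\xi_1,\dots,\xi_m$ be the zeroes of the function $\alpha_m$. Suppose that for each $i$, $\eta_i=\eta_i(\Delta)$ are numbers satisfying $\eta_i=\xi_i-1+s_i\sqrt{(\xi_i-1)^2-1}+o(1)$ as $\Delta\downarrow0$ for some sign $s_i\in\{+1,-1\}$, where the sign is chosen such that $|\eta_i|<1$ for all sufficiently small $\Delta$. Then necessarily $s_i=-1$, i.e. $$\eta_i=\xi_i-1-\sqrt{(\xi_i-1)^2-1}+o(1),\qquad i=1,\dots,m,$$ and moreover $\xi_i-1-\sqrt{(\xi_i-1)^2-1}\in(0,1)$ for all $i$.
   Context: For $x\in\mathbb{R}\setminus\{0\}$ the functions $\alpha_k(x)$, $k\ge0$, are defined by the power series expansion in $z$ $$\frac{\sinh(z)}{\cosh(z)-1+x}=\sum_{k=0}^\infty\alpha_k(x)z^{2k+1}.$$ (In the paper, $m=p-q-1$ for a CARMA$(p,q)$ process and $\eta_i$ are the ''spurious'' moving average coefficients of the sampled process.) *)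

(* Defs.v *)
From Stdlib Require Import Reals.
From Coquelicot Require Import Coquelicot.
Open Scope R_scope.

Definition gen_fun (x : R) : R -> R := fun z => sinh z / (cosh z - 1 + x).

Definition alpha (k : nat) (x : R) : R :=
  Derive_n (gen_fun x) (2 * k + 1) 0 / INR (Factorial.fact (2 * k + 1)).

(* Main.v *)
Require Import Defs.
From Stdlib Require Import Reals Lra Lia.
From Coquelicot Require Import Coquelicot.
Open Scope R_scope.

Fixpoint sm (f : nat -> R) (n : nat) : R :=
  match n with O => f O | S n' => sm f n' + f (S n') end.

Fixpoint bin (n k : nat) : R :=
  match n, k with
  | O, O => 1 | O, S _ => 0 | S _, O => 1
  | S n', S k' => bin n' k' + bin n' (S k') end.

Lemma sm_ext f g n : (forall k, (k <= n)%nat -> f k = g k) -> sm f n = sm g n.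
Proof. induction n; simpl; intros H. apply H; lia. rewrite IHn by (intros; apply H; lia). rewrite H by lia. reflexivity. Qed.

Lemma sm_shift f n : sm f (S n) = f O + sm (fun k => f (S k)) n.
Proof. induction n. simpl. ring. change (sm f (S (S n)) = f O + (sm (fun k => f (S k)) n + f (S (S n)))).
 simpl in *. rewrite IHn. ring. Qed.

Lemma sm_plus f g n : sm (fun k => f k + g k) n = sm f n + sm g n.
Proof. induction n; simpl; [ring| rewrite IHn; ring]. Qed.

Lemma sm_scal c f n : sm (fun k => c * f k) n = c * sm f n.
Proof. induction n; simpl; [ring| rewrite IHn; ring]. Qed.

Lemma sm_ge0 f n : (forall k, (k <= n)%nat -> 0 <= f k) -> 0 <= sm f n.
Proof. induction n; simpl; intros H. apply H; lia.
 assert (0 <= sm f n) by (apply IHn; intros; apply H; lia). assert (0 <= f (S n)) by (apply H; lia). lra. Qed.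

Lemma sm_ge_term f n j : (forall k, (k <= n)%nat -> 0 <= f k) -> (j <= n)%nat -> f j <= sm f n.
Proof. induction n; simpl; intros H Hj.
 replace j with O by lia. lra.
 destruct (Nat.eq_dec j (S n)). subst. assert (0 <= sm f n) by (apply sm_ge0; intros; apply H; lia). lra.
 assert (f j <= sm f n) by (apply IHn; [intros; apply H; lia| lia]). assert (0 <= f (S n)) by (apply H; lia). lra. Qed.

Lemma sm_zero f n : (forall k, (k <= n)%nat -> f k = 0) -> sm f n = 0.
Proof. intros H. rewrite (sm_ext f (fun _ => 0)) by auto. clear H. induction n; simpl; [ring| rewrite IHn; ring]. Qed.

Lemma bin_ge0 n k : 0 <= bin n k.
Proof. revert k; induction n; destruct k; simpl; try lra. pose proof (IHn k). pose proof (IHn (S k)). lra. Qed.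

Lemma bin_over n k : (n < k)%nat -> bin n k = 0.
Proof. revert k; induction n; destruct k; simpl; intros; try lra; try lia.
 rewrite !IHn by lia. ring. Qed.

Lemma bin_pos n k : (k <= n)%nat -> 0 < bin n k.
Proof. revert k; induction n; destruct k; simpl; intros; try lra; try lia.
 pose proof (IHn k ltac:(lia)). pose proof (bin_ge0 n (S k)). lra. Qed.

Definition L (n : nat) (a b : nat -> R) : R := sm (fun k => bin n k * a k * b (n - k)%nat) n.

Lemma L_pascal n a b : L (S n) a b = L n (fun k => a (S k)) b + L n a (fun k => b (S k)).
Proof.
 unfold L. rewrite sm_shift. simpl (bin (S n) O). rewrite Nat.sub_0_r.
 set (h := fun k => bin n k * a k * b (S n - k)%nat).
 assert (E1 : sm h (S n) = sm (fun k => bin n k * a k * b (S (n - k))) n).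
 { simpl. unfold h at 2. rewrite bin_over by lia. rewrite Rmult_0_l, Rmult_0_l, Rplus_0_r.
   apply sm_ext. intros k Hk. unfold h. f_equal. f_equal. lia. }
 rewrite <- E1, sm_shift. unfold h. simpl (bin n O). rewrite Nat.sub_0_r.
 simpl (fun k => _). 
 rewrite (sm_ext (fun k => (bin n k + bin n (S k)) * a (S k) * b (n - k)%nat)
   (fun k => bin n k * a (S k) * b (n - k)%nat + bin n (S k) * a (S k) * b (n-k)%nat)) by (intros; ring).
 rewrite sm_plus. replace (bin n 0) with 1. ring. destruct n; reflexivity.
Qed.

Lemma L_ext n a b a' b' : (forall i, (i <= n)%nat -> a i = a' i) -> (forall i, (i <= n)%nat -> b i = b' i) -> L n a b = L n a' b'.
Proof. intros Ha Hb. unfold L. apply sm_ext. intros k Hk. rewrite Ha, Hb by lia. reflexivity. Qed.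

Lemma Derive_n_D f k t : Derive_n (Derive f) k t = Derive_n f (S k) t.
Proof. rewrite <- Nat.add_1_r. rewrite <- (Derive_n_comp f k 1). reflexivity. Qed.

Lemma exD f k t : ex_derive f t -> ex_derive_n (Derive f) k t -> ex_derive_n f (S k) t.
Proof. intros H1 H2. destruct k. exact H1. simpl in H2 |- *.
 apply (ex_derive_ext (Derive_n (Derive f) k)). intros; apply Derive_n_D. exact H2. Qed.

Lemma exD' f k t : ex_derive_n f (S k) t -> ex_derive_n (Derive f) k t.
Proof. intros H. destruct k. exact I. simpl in H |- *.
 apply (ex_derive_ext (Derive_n f (S k))). intros; symmetry; apply Derive_n_D. exact H. Qed.

Section Smooth.
Variable O : R -> Prop.
Hypothesis HO : forall t, O t -> locally t O.

Definition sup n f := forall k t, (k <= n)%nat -> O t -> ex_derive_n f k t.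

Lemma sup_loc n f t : sup n f -> O t -> locally t (fun y => forall k, (k<=n)%nat -> ex_derive_n f k y).
Proof. intros H Ht. apply (filter_imp O). intros y Hy k Hk. apply H; auto. apply HO; auto. Qed.

Lemma sup_mono n m f : (m <= n)%nat -> sup n f -> sup m f.
Proof. intros Hm H k t Hk Ht. apply H; auto; lia. Qed.

Lemma sup_ex n f t : sup (S n) f -> O t -> ex_derive f t.
Proof. intros H Ht. apply (H 1%nat t); auto; lia. Qed.

Lemma sup_D n f : sup (S n) f -> sup n (Derive f).
Proof. intros H k t Hk Ht. apply exD'. apply H; auto; lia. Qed.

Lemma sup_S n f : (forall t, O t -> ex_derive f t) -> sup n (Derive f) -> sup (S n) f.
Proof. intros H1 H2 k t Hk Ht. destruct k. exact I. apply exD. auto. apply H2; auto; lia. Qed.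

Lemma sup_ext n f g : (forall t, O t -> f t = g t) -> sup n f -> sup n g.
Proof. intros E H k t Hk Ht. apply (ex_derive_n_ext_loc f). apply (filter_imp O); auto.
 apply H; auto. Qed.

Lemma sup_const n c : sup n (fun _ => c).
Proof. intros k t _ _. apply ex_derive_n_const. Qed.

Lemma sup_plus n f g : sup n f -> sup n g -> sup n (fun y => f y + g y).
Proof. intros Hf Hg k t Hk Ht. apply ex_derive_n_plus.
 apply (filter_imp (fun y => forall k, (k<=n)%nat -> ex_derive_n f k y)). intros; apply H; lia. apply sup_loc; auto.
 apply (filter_imp (fun y => forall k, (k<=n)%nat -> ex_derive_n g k y)). intros; apply H; lia. apply sup_loc; auto. Qed.

Lemma sup_minus n f g : sup n f -> sup n g -> sup n (fun y => f y - g y).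
Proof. intros Hf Hg k t Hk Ht. apply ex_derive_n_minus.
 apply (filter_imp (fun y => forall k, (k<=n)%nat -> ex_derive_n f k y)). intros; apply H; lia. apply sup_loc; auto.
 apply (filter_imp (fun y => forall k, (k<=n)%nat -> ex_derive_n g k y)). intros; apply H; lia. apply sup_loc; auto. Qed.

Lemma sup_scal n c f : sup n f -> sup n (fun y => c * f y).
Proof. intros Hf k t Hk Ht. apply ex_derive_n_scal_l. auto. Qed.

Lemma sup_opp n f : sup n f -> sup n (fun y => - f y).
Proof. intros Hf k t Hk Ht. apply ex_derive_n_opp. auto. Qed.

Lemma Dn_plus n f g t : sup n f -> sup n g -> O t -> Derive_n (fun y => f y + g y) n t = Derive_n f n t + Derive_n g n t.
Proof. intros Hf Hg Ht. apply Derive_n_plus; apply sup_loc; auto. Qed.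
Lemma Dn_minus n f g t : sup n f -> sup n g -> O t -> Derive_n (fun y => f y - g y) n t = Derive_n f n t - Derive_n g n t.
Proof. intros Hf Hg Ht. apply Derive_n_minus; apply sup_loc; auto. Qed.

Lemma prod_n n : forall f h, sup n f -> sup n h -> forall k t, (k<=n)%nat -> O t ->
  ex_derive_n (fun y => f y * h y) k t /\
  Derive_n (fun y => f y * h y) k t = L k (fun i => Derive_n f i t) (fun i => Derive_n h i t).
Proof.
 induction n; intros f h Hf Hh k t Hk Ht.
 - replace k with 0%nat by lia. split. exact I. unfold L; simpl. ring.
 - destruct (Compare_dec.le_lt_dec k n) as [Hkn|Hkn].
   + apply IHn; auto; apply (sup_mono (S n)); auto.
   + replace k with (S n) by lia. clear k Hk Hkn.
     assert (Hf' := sup_D _ _ Hf). assert (Hh' := sup_D _ _ Hh).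
     assert (Hf0 := sup_mono (S n) n f (le_S _ _ (le_n _)) Hf).
     assert (Hh0 := sup_mono (S n) n h (le_S _ _ (le_n _)) Hh).
     set (P := fun y => Derive f y * h y + f y * Derive h y).
     assert (EL : locally t (fun y => Derive (fun y => f y * h y) y = P y)).
     { apply (filter_imp O). intros y Hy. apply Derive_mult; eapply sup_ex; eauto. auto. }
     assert (S1 : sup n (fun y => Derive f y * h y)).
     { intros k y Hk Hy. apply (IHn (Derive f) h); auto. }
     assert (S2 : sup n (fun y => f y * Derive h y)).
     { intros k y Hk Hy. apply (IHn f (Derive h)); auto. }
     split.
     * apply exD. apply ex_derive_mult; eapply sup_ex; eauto.
       apply (ex_derive_n_ext_loc P). apply (filter_imp _ _ (fun y H => eq_sym H) EL).
       apply (sup_plus n _ _ S1 S2 n t (le_n _) Ht).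
     * rewrite <- Derive_n_D. rewrite (Derive_n_ext_loc (Derive (fun y => f y * h y)) P n t EL).
       unfold P. rewrite Dn_plus by auto.
       rewrite (proj2 (IHn (Derive f) h Hf' Hh0 n t (le_n _) Ht)).
       rewrite (proj2 (IHn f (Derive h) Hf0 Hh' n t (le_n _) Ht)).
       rewrite L_pascal. f_equal; apply L_ext; intros; try reflexivity; apply Derive_n_D.
Qed.

Lemma sup_mult n f h : sup n f -> sup n h -> sup n (fun y => f y * h y).
Proof. intros Hf Hh k t Hk Ht. apply (prod_n n); auto. Qed.

End Smooth.

Lemma ch_sh y : cosh y * cosh y - sinh y * sinh y = 1.
Proof. unfold cosh, sinh.
 assert (exp y * exp (- y) = 1) by (rewrite <- exp_plus, Rplus_opp_r; apply exp_0).
 field_simplify. nra. Qed.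

Lemma open_nz (f : R -> R) t : continuous f t -> f t <> 0 -> locally t (fun y => f y <> 0).
Proof. intros Hc Hn. apply (Hc (fun z => z <> 0)).
 assert (Hp : 0 < Rabs (f t)) by (apply Rabs_pos_lt; auto).
 exists (mkposreal _ Hp). intros z Hz Hz0. change (Rabs (z - f t) < Rabs (f t)) in Hz.
 subst z. rewrite Rminus_0_l, Rabs_Ropp in Hz. lra. Qed.

Section Fun.
Variable x : R.
Hypothesis Hx : x <> 0.
Definition Dn y := cosh y - 1 + x.
Definition OO y := Dn y <> 0.
Definition uu y := / Dn y.
Definition gg := gen_fun x.
Definition KK := x * (2 - x).

Lemma is_der_D y : is_derive Dn y (sinh y).
Proof. unfold Dn. apply is_derive_Reals.
 replace (sinh y) with (sinh y - 0 + 0) by ring.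
 apply derivable_pt_lim_plus. apply derivable_pt_lim_minus. apply derivable_pt_lim_cosh.
 apply derivable_pt_lim_const. apply derivable_pt_lim_const. Qed.

Lemma HOO t : OO t -> locally t OO.
Proof. intros H. exact (open_nz Dn t (ex_derive_continuous _ _ (ex_intro _ _ (is_der_D t))) H). Qed.

Lemma der_u y : OO y -> is_derive uu y (- (gg y * uu y)).
Proof. intros H. unfold uu. eapply is_derive_ext. intros; reflexivity.
 replace (- (gg y * / Dn y)) with (- sinh y / Dn y ^ 2).
 apply is_derive_inv. apply is_der_D. exact H.
 unfold gg, gen_fun. fold (Dn y). field. exact H. Qed.

Lemma der_g y : OO y -> is_derive gg y (/ 2 * (1 - gg y * gg y + KK * (uu y * uu y))).
Proof. intros H.
 apply (is_derive_ext (fun y => sinh y * uu y)). intros; reflexivity.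
 replace (/ 2 * (1 - gg y * gg y + KK * (uu y * uu y))) with
   (cosh y * uu y + sinh y * (- (gg y * uu y))).
 apply (is_derive_mult sinh uu). apply is_derive_Reals, derivable_pt_lim_sinh.
 apply der_u; auto. intros; apply Rmult_comm.
 unfold gg, gen_fun, uu, KK. fold (Dn y). unfold OO in H.
 pose proof (ch_sh y). field_simplify; auto.
 cut (2*(cosh y * Dn y - sinh y^2) = Dn y^2 - sinh y^2 - x^2 + 2*x).
 intro E. rewrite <- E. field. auto. unfold Dn. nra. Qed.

Definition FF y := / 2 * (1 - gg y * gg y + KK * (uu y * uu y)).

Lemma smooth n : sup OO n gg /\ sup OO n uu.
Proof. induction n.
 - split; intros k t Hk _; replace k with 0%nat by lia; exact I.
 - destruct IHn as [Hg Hu]. split.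
   + apply sup_S. intros t Ht; eexists; apply der_g; auto.
     apply (sup_ext OO HOO n FF). intros t Ht. symmetry. apply is_derive_unique, der_g; auto.
     unfold FF. apply sup_scal. apply (sup_plus OO HOO). apply (sup_minus OO HOO). apply sup_const.
     apply (sup_mult OO HOO); auto. apply sup_scal. apply (sup_mult OO HOO); auto.
   + apply sup_S. intros t Ht; eexists; apply der_u; auto.
     apply (sup_ext OO HOO n (fun y => - (gg y * uu y))). intros t Ht. symmetry. apply is_derive_unique, der_u; auto.
     apply sup_opp. apply (sup_mult OO HOO); auto.
Qed.

Definition G n := Derive_n gg n 0.
Definition U n := Derive_n uu n 0.
Definition dd (n : nat) : R := match n with 0%nat => 1 | _ => 0 end.

Lemma OO0 : OO 0.
Proof. unfold OO, Dn. rewrite cosh_0. replace (1 - 1 + x) with x by ring. auto. Qed.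

Lemma G0 : G 0 = 0.
Proof. unfold G, gg, gen_fun. simpl. rewrite sinh_0. unfold Rdiv. ring. Qed.
Lemma U0 : U 0 = / x.
Proof. unfold U, uu, Dn. simpl. rewrite cosh_0. f_equal. ring. Qed.

Lemma recU n : U (S n) = - L n G U.
Proof. unfold U. rewrite <- Derive_n_D.
 rewrite (Derive_n_ext_loc (Derive uu) (fun y => - (gg y * uu y)) n 0).
 rewrite Derive_n_opp. f_equal. apply (prod_n OO HOO n); try apply smooth. lia. apply OO0.
 apply (filter_imp OO). intros t Ht. apply is_derive_unique, der_u; auto. apply HOO, OO0. Qed.

Lemma recG n : G (S n) = / 2 * (dd n - L n G G + KK * L n U U).
Proof. unfold G. rewrite <- Derive_n_D.
 rewrite (Derive_n_ext_loc (Derive gg) FF n 0).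
 2:{ apply (filter_imp OO). intros t Ht. apply is_derive_unique, der_g; auto. apply HOO, OO0. }
 destruct (smooth n) as [Hg Hu].
 unfold FF. rewrite Derive_n_scal_l. f_equal.
 assert (S1 : sup OO n (fun y => gg y * gg y)) by (apply (sup_mult OO HOO); auto).
 assert (S2 : sup OO n (fun y => uu y * uu y)) by (apply (sup_mult OO HOO); auto).
 rewrite (Dn_plus OO HOO); [| apply (sup_minus OO HOO); [apply sup_const|exact S1] | apply sup_scal; exact S2 | exact OO0].
 rewrite (Dn_minus OO HOO); [| apply sup_const | exact S1 | exact OO0].
 rewrite Derive_n_scal_l.
 rewrite (proj2 (prod_n OO HOO n gg gg Hg Hg n 0 (le_n _) OO0)).
 rewrite (proj2 (prod_n OO HOO n uu uu Hu Hu n 0 (le_n _) OO0)).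
 f_equal. f_equal. destruct n; [reflexivity | simpl dd; first [apply Derive_n_const | symmetry; apply Derive_n_const]].
Qed.

End Fun.
Lemma L_ge0 n a b : (forall i, (i<=n)%nat -> 0 <= a i) -> (forall i, (i<=n)%nat -> 0 <= b i) -> 0 <= L n a b.
Proof. intros Ha Hb. unfold L. apply sm_ge0. intros k Hk.
 pose proof (bin_ge0 n k). pose proof (Ha k Hk). pose proof (Hb (n-k)%nat ltac:(lia)).
 apply Rmult_le_pos; [apply Rmult_le_pos|]; auto. Qed.

Lemma signs (A V : nat -> R) K : 0 <= K -> A 0%nat = 0 -> 0 < A 1%nat -> 0 < V 0%nat ->
 (forall n, (1 <= n)%nat -> A (S n) = /2 * (L n A A + K * L n V V)) ->
 (forall n, V (S n) = L n A V) -> forall k, 0 < A (S (2*k)).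
Proof.
 intros HK HA0 HA1 HV0 RA RV.
 assert (NN : forall n m, (m <= n)%nat -> 0 <= A m /\ 0 <= V m).
 { induction n; intros m Hm.
   - replace m with 0%nat by lia. lra.
   - destruct (Nat.eq_dec m (S n)) as [->|Hne]; [|apply IHn; lia].
     assert (La : forall i, (i <= n)%nat -> 0 <= A i) by (intros; apply IHn; lia).
     assert (Lv : forall i, (i <= n)%nat -> 0 <= V i) by (intros; apply IHn; lia).
     split.
     + destruct n. lra. rewrite RA by lia.
       pose proof (L_ge0 (S n) A A La La). pose proof (L_ge0 (S n) V V Lv Lv).
       assert (0 <= K * L (S n) V V) by (apply Rmult_le_pos; auto). lra.
     + rewrite RV. apply L_ge0; auto. }
 induction k. simpl. exact HA1.
 replace (S (2 * S k)) with (S (S (S (2*k)))) by lia.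
 rewrite RA by lia.
 assert (La : forall i, (i <= S (S (2*k)))%nat -> 0 <= A i) by (intros i _; apply (NN i); lia).
 assert (Lv : forall i, (i <= S (S (2*k)))%nat -> 0 <= V i) by (intros i _; apply (NN i); lia).
 pose proof (L_ge0 _ V V Lv Lv).
 assert (0 <= K * L (S (S (2*k))) V V) by (apply Rmult_le_pos; auto).
 assert (T : bin (S (S (2*k))) 1 * A 1%nat * A (S (S (2*k)) - 1)%nat <= L (S (S (2*k))) A A).
 { unfold L. apply (sm_ge_term (fun k0 => bin (S (S (2*k))) k0 * A k0 * A (S (S (2 * k)) - k0)%nat)).
   intros j Hj. pose proof (bin_ge0 (S (S (2*k))) j). pose proof (La j Hj). pose proof (La (S (S (2*k)) - j)%nat ltac:(lia)).
   apply Rmult_le_pos; [apply Rmult_le_pos|]; auto. lia. }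
 replace (S (S (2*k)) - 1)%nat with (S (2*k)) in T by lia.
 pose proof (bin_pos (S (S (2*k))) 1 ltac:(lia)).
 assert (0 < bin (S (S (2*k))) 1 * A 1%nat * A (S (2*k))) by (apply Rmult_lt_0_compat; [apply Rmult_lt_0_compat|]; auto).
 lra.
Qed.
Definition cc (n : nat) : R := (-1) ^ (Nat.div2 n).
Lemma cc_ev a : cc (2*a) = (-1)^a.
Proof. unfold cc. rewrite Nat.div2_double. reflexivity. Qed.
Lemma cc_od a : cc (S (2*a)) = (-1)^a.
Proof. unfold cc. rewrite Nat.div2_succ_double. reflexivity. Qed.

Lemma sm_mul c f n : c * sm f n = sm (fun k => c * f k) n.
Proof. rewrite sm_scal. reflexivity. Qed.

Section Par.
Variable x : R.
Hypothesis Hx : x <> 0.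

Lemma parity : forall n m, (m <= n)%nat -> (forall a, m = (2*a)%nat -> G x m = 0) /\ (forall a, m = S (2*a) -> U x m = 0).
Proof.
 induction n; intros m Hm.
 - replace m with 0%nat by lia. split; intros a Ha. rewrite G0. reflexivity. lia.
 - destruct (Nat.eq_dec m (S n)) as [->|Hne]; [|apply IHn; lia].
   assert (Gz : forall j, (j <= n)%nat -> forall a, j = (2*a)%nat -> G x j = 0) by (intros; eapply IHn; eauto).
   assert (Uz : forall j, (j <= n)%nat -> forall a, j = S (2*a) -> U x j = 0) by (intros; eapply IHn; eauto).
   split; intros a Ha.
   + destruct a. lia. assert (En : n = S (2*a)) by lia.
     rewrite recG by exact Hx.
     assert (dd n = 0) by (rewrite En; reflexivity).
     assert (L n (G x) (G x) = 0).
     { unfold L. apply sm_zero. intros j Hj. destruct (Nat.Even_or_Odd j) as [[b Hb]|[b Hb]].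
       rewrite (Gz j Hj b Hb). ring. rewrite (Gz (n-j)%nat ltac:(lia) (a-b)%nat) by lia. ring. }
     assert (L n (U x) (U x) = 0).
     { unfold L. apply sm_zero. intros j Hj. destruct (Nat.Even_or_Odd j) as [[b Hb]|[b Hb]].
       rewrite (Uz (n-j)%nat ltac:(lia) (a-b)%nat) by lia. ring. rewrite (Uz j Hj b) by lia. ring. }
     rewrite H, H0, H1. ring.
   + assert (En : n = (2*a)%nat) by lia. rewrite recU by exact Hx.
     assert (L n (G x) (U x) = 0).
     { unfold L. apply sm_zero. intros j Hj. destruct (Nat.Even_or_Odd j) as [[b Hb]|[b Hb]].
       rewrite (Gz j Hj b Hb). ring. rewrite (Uz (n-j)%nat ltac:(lia) (a-b-1)%nat) by lia. ring. }
     rewrite H. ring.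
Qed.

Lemma Gev a : G x (2*a) = 0.
Proof. apply (proj1 (parity (2*a) (2*a) (le_n _)) a). reflexivity. Qed.
Lemma Uod a : U x (S (2*a)) = 0.
Proof. apply (proj2 (parity (S (2*a)) (S (2*a)) (le_n _)) a). reflexivity. Qed.

Ltac par j a := destruct (Nat.Even_or_Odd j) as [[a ->]|[a ->]]; [|replace (2*a+1)%nat with (S (2*a)) by lia].

Lemma T1 j m : cc (S (j+m)) * (- (G x j * G x m)) = (cc j * G x j) * (cc m * G x m).
Proof. par j a; par m b; rewrite ?Gev; try ring.
 replace (S (S (2*a) + S (2*b))) with (S (2*(a+b+1))) by lia. rewrite !cc_od, !pow_add. simpl. ring. Qed.

Lemma T2 j m : cc (S (j+m)) * (U x j * U x m) = (cc j * U x j) * (cc m * U x m).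
Proof. par j a; par m b; rewrite ?Uod; try ring.
 replace (S (2*a + 2*b)) with (S (2*(a+b))) by lia. rewrite !cc_ev, cc_od, !pow_add. ring. Qed.

Lemma T3 j m : cc (S (j+m)) * (- (G x j * U x m)) = (cc j * G x j) * (cc m * U x m).
Proof. par j a; par m b; rewrite ?Gev, ?Uod; try ring.
 replace (S (S (2*a) + 2*b)) with (2*(a+b+1))%nat by lia. rewrite !cc_ev, cc_od, !pow_add. simpl. ring. Qed.

Lemma tw1 n : cc (S n) * - L n (G x) (G x) = L n (fun k => cc k * G x k) (fun k => cc k * G x k).
Proof. unfold L. replace (cc (S n) * - sm (fun k => bin n k * G x k * G x (n - k)%nat) n)
  with ((- cc (S n)) * sm (fun k => bin n k * G x k * G x (n - k)%nat) n) by ring.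
 rewrite sm_mul. apply sm_ext. intros j Hj. pose proof (T1 j (n-j)) as T.
 replace (j + (n-j))%nat with n in T by lia.
 replace (- cc (S n) * (bin n j * G x j * G x (n - j)%nat)) with (bin n j * (cc (S n) * - (G x j * G x (n-j)%nat))) by ring.
 rewrite T. ring. Qed.

Lemma tw2 n : cc (S n) * L n (U x) (U x) = L n (fun k => cc k * U x k) (fun k => cc k * U x k).
Proof. unfold L. rewrite sm_mul. apply sm_ext. intros j Hj. pose proof (T2 j (n-j)) as T.
 replace (j + (n-j))%nat with n in T by lia.
 replace (cc (S n) * (bin n j * U x j * U x (n - j)%nat)) with (bin n j * (cc (S n) * (U x j * U x (n-j)%nat))) by ring.
 rewrite T. ring. Qed.

Lemma tw3 n : cc (S n) * - L n (G x) (U x) = L n (fun k => cc k * G x k) (fun k => cc k * U x k).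
Proof. unfold L. replace (cc (S n) * - sm (fun k => bin n k * G x k * U x (n - k)%nat) n)
  with ((- cc (S n)) * sm (fun k => bin n k * G x k * U x (n - k)%nat) n) by ring.
 rewrite sm_mul. apply sm_ext. intros j Hj. pose proof (T3 j (n-j)) as T.
 replace (j + (n-j))%nat with n in T by lia.
 replace (- cc (S n) * (bin n j * G x j * U x (n - j)%nat)) with (bin n j * (cc (S n) * - (G x j * U x (n-j)%nat))) by ring.
 rewrite T. ring. Qed.

Lemma G1 : G x 1 = / x.
Proof. rewrite recG by exact Hx. unfold L. simpl. rewrite G0, U0. unfold KK. field. exact Hx. Qed.

Lemma pos_case : 0 < x -> x <= 2 -> forall k, G x (S (2*k)) <> 0.
Proof. intros H1 H2 k.
 set (A := fun n => cc n * G x n). set (V := fun n => cc n * U x n).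
 assert (P := signs A V (KK x)).
 assert (HA : 0 < A (S (2*k))).
 { apply P.
   - unfold KK. nra.
   - unfold A. rewrite G0. ring.
   - unfold A. rewrite G1. replace (cc 1) with 1 by reflexivity. rewrite Rmult_1_l. apply Rinv_0_lt_compat; auto.
   - unfold V. rewrite U0. replace (cc 0) with 1 by reflexivity. rewrite Rmult_1_l. apply Rinv_0_lt_compat; auto.
   - intros n Hn. unfold A at 1. rewrite recG by exact Hx.
     replace (dd n) with 0 by (destruct n; [lia|reflexivity]).
     replace (cc (S n) * (/ 2 * (0 - L n (G x) (G x) + KK x * L n (U x) (U x))))
       with (/2 * (cc (S n) * - L n (G x) (G x) + KK x * (cc (S n) * L n (U x) (U x)))) by ring.
     rewrite tw1, tw2. reflexivity.
   - intros n. unfold V at 1. rewrite recU by exact Hx. apply tw3. }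
 unfold A in HA. intro E. rewrite E in HA. lra.
Qed.

Lemma neg_case : x < 0 -> forall k, G x (S (2*k)) <> 0.
Proof. intros H1 k.
 set (A := fun n => - G x n). set (V := fun n => - U x n).
 assert (P := signs A V (- KK x)).
 assert (HA : 0 < A (S (2*k))).
 { apply P.
   - unfold KK. nra.
   - unfold A. rewrite G0. ring.
   - unfold A. rewrite G1. rewrite <- Rinv_opp. apply Rinv_0_lt_compat; lra.
   - unfold V. rewrite U0. rewrite <- Rinv_opp. apply Rinv_0_lt_compat; lra.
   - intros n Hn. unfold A at 1. rewrite recG by exact Hx.
     replace (dd n) with 0 by (destruct n; [lia|reflexivity]).
     replace (L n A A) with (L n (G x) (G x)) by (apply sm_ext; intros; unfold A; ring).
     replace (L n V V) with (L n (U x) (U x)) by (apply sm_ext; intros; unfold V; ring).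
     ring.
   - intros n. unfold V at 1. rewrite recU by exact Hx.
     replace (L n A V) with (L n (G x) (U x)) by (apply sm_ext; intros; unfold A, V; ring). ring. }
 unfold A in HA. intro E. rewrite E in HA. lra.
Qed.

End Par.

Theorem proposition2p3 :
  forall (m : nat), (1 <= m)%nat ->
  forall xi : R, xi <> 0 -> alpha m xi = 0 ->
    (0 < xi - 1 - sqrt ((xi - 1) ^ 2 - 1) < 1) /\
    (forall (eta : R -> C) (s : R), (s = 1 \/ s = -1) ->
       filterlim eta (at_right 0)
         (locally (RtoC (xi - 1 + s * sqrt ((xi - 1) ^ 2 - 1)))) ->
       at_right 0 (fun Delta => Cmod (eta Delta) < 1) ->
       s = -1).
Proof.
 intros m Hm xi Hxi Ha.
 assert (H2 : 2 < xi).
 { destruct (Rlt_le_dec 2 xi) as [h|h]; auto. exfalso.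
   assert (Gne : G xi (S (2*m)) <> 0).
   { destruct (Rlt_or_le xi 0) as [h'|h'].
     apply neg_case; auto. apply pos_case; auto. lra. }
   apply Gne. unfold alpha in Ha. unfold G, gg. replace (S (2*m)) with (2*m+1)%nat by lia.
   pose proof (INR_fact_neq_0 (2*m+1)) as F.
   set (D := Derive_n (gen_fun xi) (2 * m + 1) 0) in *.
   assert (E : D = (D / INR (Factorial.fact (2*m+1))) * INR (Factorial.fact (2*m+1))) by (field; auto).
   rewrite E, Ha. ring. }
 assert (Hq : 0 <= (xi - 1) ^ 2 - 1) by nra.
 pose proof (sqrt_sqrt _ Hq) as Hs2. pose proof (sqrt_pos ((xi - 1) ^ 2 - 1)) as Hs0.
 set (s := sqrt ((xi - 1) ^ 2 - 1)) in *.
 split.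
 - split; nra.
 - intros eta s0 Hs Hlim Hev. destruct Hs as [-> | ->]; [exfalso | reflexivity].
   set (Lm := xi - 1 + 1 * s) in *.
   assert (HL : 1 < Lm) by (unfold Lm; lra).
   assert (Hloc : locally (RtoC Lm) (fun z : C => 1 < Cmod z)).
   { assert (Hp : 0 < Lm - 1) by lra. exists (mkposreal _ Hp). intros z Hz.
     destruct Hz as [Hz1 _]. change (Rabs (fst z - Lm) < Lm - 1) in Hz1.
     pose proof (re_le_Cmod z). unfold Re in *.
     apply Rabs_def2 in Hz1. destruct Hz1.
     pose proof (Rle_abs (fst z)). lra. }
   assert (Hb : at_right 0 (fun d => Cmod (eta d) < 1 /\ 1 < Cmod (eta d))).
   { apply filter_and. exact Hev. exact (Hlim _ Hloc). }
   destruct (@filter_ex R (at_right 0) (at_right_proper_filter 0) _ Hb) as [d [h1 h2]]. lra.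
Qed.
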